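(* If $\mu>-3$ and $|\nu|<\mu+3$, then the function $x\mapsto x\tilde{t}_{\mu,\nu}'(x)/\tilde{t}_{\mu,\nu}(x)$ is strictly increasing on $(0,\infty)$.
   Context: For real $\mu,\nu$ the (normalized) modified Lommel function of the first kind is $$\tilde{t}_{\mu,\nu}(x)=\sum_{k=0}^\infty\frac{(\frac{1}{2}x)^{\mu+2k+1}}{\Gamma\big(k+\frac{\mu-\nu+3}{2}\big)\Gamma\big(k+\frac{\mu+\nu+3}{2}\big)},\quad x>0.$$ *)

(* Defs.v *)
From Stdlib Require Import Reals.
From Coquelicot Require Import Coquelicot.
Open Scope R_scope.

(* Euler's Gamma function, Gamma(s) = int_0^oo t^(s-1) e^(-t) dt, for s > 0
   (only ever applied to positive arguments below). *)
Definition Gamma (s : R) : R :=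
  RInt_gen (fun t => Rpower t (s - 1) * exp (- t)) (at_right 0) (Rbar_locally p_infty).

Definition lommel_t (mu nu : R) (x : R) : R :=
  Series (fun k : nat =>
    Rpower (x / 2) (mu + 2 * INR k + 1) /
    (Gamma (INR k + (mu - nu + 3) / 2) * Gamma (INR k + (mu + nu + 3) / 2))).

(* Main.v *)
Require Import Defs.
From Stdlib Require Import Reals.
From Coquelicot Require Import Coquelicot.
From Stdlib Require Import Lra Classical.
Open Scope R_scope.

Lemma is_derive_Rpower (y x : R) : 0 < x ->
  is_derive (fun t => Rpower t y) x (y * Rpower x (y - 1)).
Proof. intros; apply is_derive_Reals, derivable_pt_lim_power; auto. Qed.

Lemma ex_derive_Rpower (y x : R) : 0 < x -> ex_derive (fun t => Rpower t y) x.
Proof. intros; eexists; apply is_derive_Rpower; auto. Qed.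

Lemma cont_Rpower (y x : R) : 0 < x -> continuous (fun t => Rpower t y) x.
Proof. intros; apply (@ex_derive_continuous R_AbsRing R_NormedModule), ex_derive_Rpower; auto. Qed.

Definition gf (s t : R) := Rpower t (s - 1) * exp (- t).

Lemma cont_gf s x : 0 < x -> continuous (gf s) x.
Proof.
  intros Hx; apply (@ex_derive_continuous R_AbsRing R_NormedModule); unfold gf.
  auto_derive. apply ex_derive_Rpower; auto.
Qed.

Lemma gf_nonneg s x : 0 < x -> 0 <= gf s x.
Proof.
  intros; unfold gf, Rpower. apply Rmult_le_pos; left; apply exp_pos.
Qed.

Lemma ex_RInt_pos (f : R -> R) a b : (forall x, 0 < x -> continuous f x) ->
  0 < a -> a <= b -> ex_RInt f a b.
Proof.
  intros Hc Ha Hab; apply (@ex_RInt_continuous R_CompleteNormedModule); intros z Hz.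
  apply Hc. rewrite Rmin_left in Hz by lra. lra.
Qed.

Lemma gen_sup (f : R -> R) (B : R) :
 (forall x, 0 < x -> continuous f x) ->
 (forall x, 0 < x -> 0 <= f x) ->
 (forall a b, 0 < a -> a <= b -> RInt f a b <= B) ->
 exists L, is_RInt_gen f (at_right 0) (Rbar_locally p_infty) L /\
   (forall a b, 0 < a -> a <= b -> RInt f a b <= L).
Proof.
  intros Hc Hp HB.
  set (E := fun v => exists a b, 0 < a /\ a <= b /\ v = RInt f a b).
  assert (Hb : bound E). { exists B; intros v (a & b & Ha & Hab & ->); auto. }
  assert (He : exists v, E v). { exists (RInt f 1 1); exists 1, 1; repeat split; lra. }
  destruct (completeness E Hb He) as [L [HL1 HL2]].
  exists L; split.
  2:{ intros a b Ha Hab; apply HL1; exists a, b; auto. }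
  intros P [eps HP].
  destruct (classic (exists v, E v /\ L - eps < v)) as [[v [(a0 & b0 & Ha0 & Hab0 & ->) Hv]] | Hn].
  2:{ exfalso. assert (L <= L - eps). { apply HL2. intros v Ev.
        destruct (Rle_or_lt v (L - eps)) as [h|h]; auto. exfalso; apply Hn; exists v; auto. }
      destruct eps; simpl in *; lra. }
  apply (Filter_prod _ _ _ (fun a => 0 < a < a0) (fun b => b0 < b)).
  - exists (mkposreal a0 Ha0). intros y Hy Hy0. split; auto.
    unfold ball in Hy; simpl in Hy; unfold AbsRing_ball, abs, minus, plus, opp in Hy; simpl in Hy.
    apply Rabs_def2 in Hy. lra.
  - exists b0. auto.
  - intros a b [Ha Ha'] Hb'. simpl. exists (RInt f a b). split.
    + apply (@RInt_correct R_CompleteNormedModule), ex_RInt_pos; auto; lra.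
    + apply HP. unfold ball; simpl; unfold AbsRing_ball, abs, minus, plus, opp; simpl.
      assert (Hle : RInt f a0 b0 <= RInt f a b).
      { assert (e1 := RInt_Chasles f a a0 b (ex_RInt_pos f a a0 Hc ltac:(lra) ltac:(lra))
                   (ex_RInt_pos f a0 b Hc ltac:(lra) ltac:(lra))).
        assert (e2 := RInt_Chasles f a0 b0 b (ex_RInt_pos f a0 b0 Hc ltac:(lra) ltac:(lra))
                   (ex_RInt_pos f b0 b Hc ltac:(lra) ltac:(lra))).
        change plus with Rplus in e1, e2. simpl in e1, e2.
        assert (0 <= RInt f a a0).
        { apply RInt_ge_0; [lra| apply ex_RInt_pos; auto; lra| intros; apply Hp; lra]. }
        assert (0 <= RInt f b0 b).
        { apply RInt_ge_0; [lra| apply ex_RInt_pos; auto; lra| intros; apply Hp; lra]. }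
        lra. }
      assert (RInt f a b <= L). { apply HL1; exists a, b; repeat split; lra. }
      rewrite Rabs_left1 by lra. destruct eps; simpl in *; lra.
Qed.

Lemma is_derive_eq (f : R -> R) x l l' : is_derive f x l -> l = l' -> is_derive f x l'.
Proof. intros H ->; auto. Qed.

Lemma exp_mono x y : x <= y -> exp x <= exp y.
Proof. intros [h|h]. left; apply exp_increasing; auto. right; rewrite h; auto. Qed.

Lemma Rpower_le_exp s : exists K, 0 < K /\ forall t, 1 <= t -> Rpower t (s-1) <= K * exp (t/2).
Proof.
  set (p := Rmax (s-1) 1). assert (Hp : 1 <= p) by apply Rmax_r.
  assert (Hsp : s - 1 <= p) by apply Rmax_l.
  set (c := 2 * p).
  exists (exp (p * (ln c - 1))). split; [apply exp_pos|].
  intros t Ht.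
  apply Rle_trans with (Rpower t p); [apply Rle_Rpower; auto|].
  assert (H : p * ln t <= t / 2 + p * (ln c - 1)).
  { assert (Hl : ln t = ln (t / c) + ln c).
    { rewrite <- ln_mult. f_equal. unfold c; field; lra. apply Rdiv_lt_0_compat; unfold c; lra. unfold c; lra. }
    assert (Hu : 1 + ln (t / c) <= t / c).
    { rewrite <- (exp_ln (t / c)) at 2. apply exp_ineq1_le. apply Rdiv_lt_0_compat; unfold c; lra. }
    rewrite Hl. assert (p * (t / c) = t / 2). { unfold c; field; lra. }
    nra. }
  unfold Rpower. rewrite Rmult_comm, <- exp_plus. apply exp_mono. lra.
Qed.

Lemma RInt_mono_int (f : R -> R) a b a' b' :
  (forall x, 0 < x -> continuous f x) -> (forall x, 0 < x -> 0 <= f x) ->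
  0 < a' -> a' <= a -> a <= b -> b <= b' -> RInt f a b <= RInt f a' b'.
Proof.
  intros Hc Hp H1 H2 H3 H4.
  assert (e1 := RInt_Chasles f a' a b' (ex_RInt_pos f a' a Hc ltac:(lra) ltac:(lra))
                   (ex_RInt_pos f a b' Hc ltac:(lra) ltac:(lra))).
  assert (e2 := RInt_Chasles f a b b' (ex_RInt_pos f a b Hc ltac:(lra) ltac:(lra))
                   (ex_RInt_pos f b b' Hc ltac:(lra) ltac:(lra))).
  change plus with Rplus in e1, e2. simpl in e1, e2.
  assert (0 <= RInt f a' a).
  { apply RInt_ge_0; [lra| apply ex_RInt_pos; auto; lra| intros; apply Hp; lra]. }
  assert (0 <= RInt f b b').
  { apply RInt_ge_0; [lra| apply ex_RInt_pos; auto; lra| intros; apply Hp; lra]. }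
  lra.
Qed.

Lemma Rpower_1_l s : Rpower 1 s = 1.
Proof. unfold Rpower; rewrite ln_1, Rmult_0_r, exp_0; auto. Qed.

Lemma gf_bound s : 0 < s -> exists B, forall a b, 0 < a -> a <= b -> RInt (gf s) a b <= B.
Proof.
  intros Hs. destruct (Rpower_le_exp s) as [K [HK HKb]].
  exists (/ s + 2 * K). intros a b Ha Hab.
  set (a' := Rmin a 1). set (b' := Rmax b 1).
  assert (Ha'1 : a' <= 1) by apply Rmin_r. assert (Ha'a : a' <= a) by apply Rmin_l.
  assert (Ha'0 : 0 < a') by (unfold a', Rmin; destruct Rle_dec; lra).
  assert (Hb'1 : 1 <= b') by apply Rmax_r. assert (Hb'b : b <= b') by apply Rmax_l.
  apply Rle_trans with (RInt (gf s) a' b').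
  { apply RInt_mono_int; auto. apply cont_gf. apply gf_nonneg. }
  assert (e := RInt_Chasles (gf s) a' 1 b' (ex_RInt_pos _ a' 1 (cont_gf s) ltac:(lra) ltac:(lra))
                   (ex_RInt_pos _ 1 b' (cont_gf s) ltac:(lra) ltac:(lra))).
  change plus with Rplus in e. simpl in e. rewrite <- e. clear e.
  apply Rplus_le_compat.
  -
    assert (Hi : is_RInt (fun t => Rpower t (s-1)) a' 1 (minus (/ s * Rpower 1 s) (/ s * Rpower a' s))).
    { apply (@is_RInt_derive R_CompleteNormedModule (fun t => / s * Rpower t s)).
      - intros x Hx. rewrite Rmin_left in Hx by lra.
        eapply is_derive_eq. apply (is_derive_scal (fun t => Rpower t s)).
        apply is_derive_Rpower; lra. simpl. field. lra.
      - intros x Hx. rewrite Rmin_left in Hx by lra. apply cont_Rpower; lra. }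
    apply Rle_trans with (RInt (fun t => Rpower t (s-1)) a' 1).
    + apply RInt_le; auto.
      * apply ex_RInt_pos; auto. apply cont_gf.
      * eexists; eauto.
      * intros x Hx. unfold gf. rewrite <- (Rmult_1_r (Rpower x (s-1))) at 2.
        apply Rmult_le_compat_l. unfold Rpower; left; apply exp_pos.
        rewrite <- exp_0. apply exp_mono. lra.
    + rewrite (is_RInt_unique _ _ _ _ Hi). rewrite Rpower_1_l.
      change minus with Rminus; simpl.
      assert (0 < Rpower a' s) by (unfold Rpower; apply exp_pos).
      assert (0 < / s) by (apply Rinv_0_lt_compat; auto).
      assert (0 < K) by auto. nra.
  - assert (Hi : is_RInt (fun t => K * exp (- t / 2)) 1 b'
                   (minus (-2 * K * exp (- b' / 2)) (-2 * K * exp (- 1 / 2)))).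
    { apply (@is_RInt_derive R_CompleteNormedModule (fun t => -2 * K * exp (- t / 2))).
      - intros x Hx. auto_derive; auto. unfold Rdiv. set (E := exp _). simpl in *. field.
      - intros x Hx. apply (@ex_derive_continuous R_AbsRing R_NormedModule). auto_derive; auto. }
    apply Rle_trans with (RInt (fun t => K * exp (- t / 2)) 1 b').
    + apply RInt_le; auto.
      * apply ex_RInt_pos; auto; try lra. apply cont_gf.
      * eexists; eauto.
      * intros x Hx. unfold gf.
        apply Rle_trans with (K * exp (x / 2) * exp (- x)).
        { apply Rmult_le_compat_r. left; apply exp_pos. apply HKb; lra. }
        rewrite Rmult_assoc, <- exp_plus. right. f_equal. f_equal. field.
    + rewrite (is_RInt_unique _ _ _ _ Hi).
      change minus with Rminus; simpl.
      assert (0 < exp (- b' / 2)) by apply exp_pos.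
      assert (exp (- 1 / 2) <= 1) by (rewrite <- exp_0; apply exp_mono; lra).
      assert (0 < / s) by (apply Rinv_0_lt_compat; auto). nra.
Qed.

Lemma Gamma_ge_RInt s : 0 < s -> forall a b, 0 < a -> a <= b -> RInt (gf s) a b <= Gamma s.
Proof.
  intros Hs. destruct (gf_bound s Hs) as [B HB].
  destruct (gen_sup (gf s) B (cont_gf s) (gf_nonneg s) HB) as [L [HL1 HL2]].
  unfold Gamma. change (fun t => Rpower t (s - 1) * exp (- t)) with (gf s).
  rewrite (is_RInt_gen_unique _ _ HL1). auto.
Qed.

Lemma Gamma_ge s T m : 0 < s -> 0 < T -> (forall t, T <= t <= T + 1 -> m <= gf s t) -> m <= Gamma s.
Proof.
  intros Hs HT Hm.
  apply Rle_trans with (RInt (gf s) T (T+1)); [|apply Gamma_ge_RInt; lra].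
  apply Rle_trans with (RInt (fun _ => m) T (T+1)).
  - rewrite RInt_const. change scal with Rmult; simpl. right; ring.
  - apply RInt_le; try lra. apply ex_RInt_const. apply ex_RInt_pos; try lra. apply cont_gf.
    intros; apply Hm; lra.
Qed.

Lemma Gamma_pos s : 0 < s -> 0 < Gamma s.
Proof.
  intros Hs.
  assert (Hl2 : 0 < ln 2) by (rewrite <- ln_1; apply ln_increasing; lra).
  apply Rlt_le_trans with (exp (- Rabs (s-1) * ln 2) * exp (- 2)).
  { apply Rmult_lt_0_compat; apply exp_pos. }
  apply Gamma_ge with 1; auto; try lra.
  intros t Ht. unfold gf, Rpower. apply Rmult_le_compat; try (left; apply exp_pos).
  - apply exp_mono.
    assert (0 <= ln t) by (rewrite <- ln_1; apply ln_le; lra).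
    assert (ln t <= ln 2) by (apply ln_le; lra).
    destruct (Rle_or_lt 0 (s-1)).
    + rewrite Rabs_right by lra. nra.
    + rewrite Rabs_left by lra. nra.
  - apply exp_mono; lra.
Qed.

Lemma Gamma_big (n : nat) a T : 0 < a -> 1 <= T ->
  T ^ n * exp (- (T + 1)) <= Gamma (INR (S n) + a).
Proof.
  intros Ha HT. apply Gamma_ge with T; try lra.
  { rewrite S_INR. pose proof (pos_INR n). lra. }
  intros t Ht. unfold gf.
  replace (INR (S n) + a - 1) with (INR n + a) by (rewrite S_INR; ring).
  rewrite Rpower_plus, Rpower_pow by lra.
  apply Rmult_le_compat.
  - apply pow_le; lra.
  - left; apply exp_pos.
  - rewrite <- Rmult_1_r at 1. apply Rmult_le_compat.
    + apply pow_le; lra.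
    + lra.
    + apply pow_incr; lra.
    + unfold Rpower. rewrite <- exp_0. apply exp_mono.
      assert (0 <= ln t) by (rewrite <- ln_1; apply ln_le; lra). nra.
  - apply exp_mono; lra.
Qed.

Definition cc (a b : R) (k : nat) := / (Gamma (INR k + a) * Gamma (INR k + b)).

Lemma cc_pos a b k : 0 < a -> 0 < b -> 0 < cc a b k.
Proof.
  intros Ha Hb. unfold cc. pose proof (pos_INR k).
  apply Rinv_0_lt_compat, Rmult_lt_0_compat; apply Gamma_pos; lra.
Qed.

Lemma cc_bounded a b r : 0 < a -> 0 < b ->
  exists M, forall n, Rabs (cc a b n * r ^ n) <= M.
Proof.
  intros Ha Hb.
  set (T := Rabs r + 1). assert (HT : 1 <= T) by (unfold T; pose proof (Rabs_pos r); lra).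
  set (E := exp (- (T + 1))). assert (HE : 0 < E) by apply exp_pos.
  exists (Rabs (cc a b 0) + T / (E * E)).
  assert (HTE : 0 <= T / (E * E)).
  { apply Rmult_le_pos; [lra| left; apply Rinv_0_lt_compat; nra]. }
  intros [|m].
  - simpl. rewrite Rmult_1_r. lra.
  - apply Rle_trans with (T / (E * E)); [|pose proof (Rabs_pos (cc a b 0)); lra].
    set (P := T ^ m). assert (HP : 1 <= P) by (unfold P; apply pow_R1_Rle; lra).
    pose proof (Gamma_big m a T Ha HT) as G1.
    pose proof (Gamma_big m b T Hb HT) as G2. fold P E in G1, G2.
    assert (Hc : cc a b (S m) <= / (P * E * (P * E))).
    { unfold cc. assert (0 < P * E) by (apply Rmult_lt_0_compat; lra). apply Rinv_le_contravar. apply Rmult_lt_0_compat; lra. apply Rmult_le_compat; lra. }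
    rewrite Rabs_mult, <- RPow_abs, Rabs_right by (left; apply cc_pos; auto).
    apply Rle_trans with (/ (P * E * (P * E)) * (T * P)).
    { apply Rmult_le_compat; try apply pow_le; try apply Rabs_pos; try (left; apply cc_pos; auto); auto.
      simpl. unfold P. apply Rmult_le_compat; try apply Rabs_pos; try apply pow_le; try apply Rabs_pos.
      unfold T; lra. apply pow_incr. split. apply Rabs_pos. unfold T; lra. }
    replace (/ (P * E * (P * E)) * (T * P)) with (T / (E * E) * / P) by (field; nra).
    rewrite <- Rmult_1_r. apply Rmult_le_compat_l; auto.
    rewrite <- Rinv_1. apply Rinv_le_contravar; lra.
Qed.

Lemma cc_radius a b : 0 < a -> 0 < b -> CV_radius (cc a b) = p_infty.
Proof.
  intros Ha Hb. destruct (CV_radius_bounded (cc a b)) as [Hub _].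
  destruct (CV_radius (cc a b)) as [x| |] eqn:Hx; auto; exfalso.
  - assert (H := Hub (x + 1) (cc_bounded a b (x+1) Ha Hb)). simpl in H. lra.
  - assert (H := Hub 0 (cc_bounded a b 0 Ha Hb)). simpl in H. auto.
Qed.

Lemma Series_nonneg (u : nat -> R) : (forall n, 0 <= u n) -> ex_series u -> 0 <= Series u.
Proof.
  intros Hu He.
  apply Rle_trans with (Series (fun n => 0 * u n)).
  - rewrite Series_scal_l. lra.
  - apply Series_le; auto. intros; split; [lra|]. rewrite Rmult_0_l; auto.
Qed.

Lemma Series_pos0 (u : nat -> R) : (forall n, 0 <= u n) -> ex_series u -> 0 < u O -> 0 < Series u.
Proof.
  intros Hu He H0. rewrite Series_incr_1 by auto.
  assert (0 <= Series (fun k => u (S k))).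
  { apply Series_nonneg; auto. apply (ex_series_incr_1 u); auto. }
  lra.
Qed.

Lemma isR_minus a b la lb : is_series a la -> is_series b lb -> is_series (fun n => a n - b n) (la - lb).
Proof. intros; apply (is_series_minus a b la lb); auto. Qed.
Lemma isR_scal c a l : is_series a l -> is_series (fun n => c * a n) (c * l).
Proof. intros; apply (is_series_scal_l c a l); auto. Qed.

Section Mono.
Variable c : nat -> R.
Hypothesis c_pos : forall k, 0 < c k.
Hypothesis exF : forall z, ex_series (fun k => c k * z ^ k).
Hypothesis exG : forall z, ex_series (fun k => INR k * c k * z ^ k).

Definition Fz z := Series (fun k => c k * z ^ k).
Definition Gz z := Series (fun k => INR k * c k * z ^ k).

Lemma Fz_pos z : 0 < z -> 0 < Fz z.
Proof.
  intros Hz. apply Series_pos0; auto.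
  - intros; apply Rmult_le_pos; [left; auto| apply pow_le; lra].
  - simpl. rewrite Rmult_1_r; auto.
Qed.

Lemma Gz_pos z : 0 < z -> 0 < Gz z.
Proof.
  intros Hz. unfold Gz. rewrite Series_incr_1 by auto. simpl (INR 0). rewrite !Rmult_0_l, Rplus_0_l.
  apply Series_pos0.
  - intros; apply Rmult_le_pos; [apply Rmult_le_pos; [apply pos_INR| left; auto]| apply pow_le; lra].
  - apply (ex_series_incr_1 (fun k => INR k * c k * z ^ k)); auto.
  - simpl. rewrite Rmult_1_r, Rmult_1_l. apply Rmult_lt_0_compat; auto.
Qed.

Lemma GF_mono z1 z2 : 0 < z1 -> z1 < z2 -> Gz z1 / Fz z1 < Gz z2 / Fz z2.
Proof.
  intros H1 H12.
  pose proof (Fz_pos z1 H1) as F1. pose proof (Fz_pos z2 ltac:(lra)) as F2.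
  pose proof (Gz_pos z1 H1) as G1.
  set (m := Gz z1 / Fz z1). assert (Hm : 0 < m) by (apply Rdiv_lt_0_compat; auto).
  set (r := z2 / z1). assert (Hr : 1 < r).
  { unfold r. apply (Rmult_lt_reg_r z1); auto. unfold Rdiv; rewrite Rmult_assoc, Rinv_l; lra. }
  assert (Hz2 : z2 = z1 * r) by (unfold r; field; lra).
  set (rho := Rpower r m).
  assert (Hrho : 1 < rho).
  { unfold rho. rewrite <- (Rpower_O r) by lra. apply Rpower_lt; auto. }
  assert (E1 : Gz z1 - m * Fz z1 = 0) by (unfold m; field; lra).
  assert (Key : 0 < Gz z2 - m * Fz z2).
  { assert (S2 : is_series (fun k => INR k * c k * z2 ^ k - m * (c k * z2 ^ k)) (Gz z2 - m * Fz z2)).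
    { apply isR_minus. apply Series_correct; auto. apply isR_scal, Series_correct; auto. }
    assert (S1 : is_series (fun k => INR k * c k * z1 ^ k - m * (c k * z1 ^ k)) (Gz z1 - m * Fz z1)).
    { apply isR_minus. apply Series_correct; auto. apply isR_scal, Series_correct; auto. }
    assert (S3 := isR_minus _ _ _ _ S2 (isR_scal rho _ _ S1)).
    rewrite E1, Rmult_0_r, Rminus_0_r in S3.
    assert (S4 : is_series (fun k => (INR k - m) * c k * z1 ^ k * (r ^ k - rho)) (Gz z2 - m * Fz z2)).
    { eapply is_series_ext; [|apply S3]. intros k. simpl. rewrite Hz2, Rpow_mult_distr. ring. }
    rewrite <- (is_series_unique _ _ S4).
    apply Series_pos0.
    - intros k.
      assert (Hck : 0 <= c k * z1 ^ k) by (apply Rmult_le_pos; [left; auto| apply pow_le; lra]).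
      replace ((INR k - m) * c k * z1 ^ k * (r ^ k - rho)) with
        ((c k * z1 ^ k) * ((INR k - m) * (r ^ k - rho))) by ring.
      apply Rmult_le_pos; auto.
      rewrite <- Rpower_pow by lra. unfold rho.
      destruct (Rle_or_lt m (INR k)) as [h|h].
      + apply Rmult_le_pos; [lra|]. apply Rge_le, Rge_minus, Rle_ge, Rle_Rpower; lra.
      + assert (Rpower r (INR k) < Rpower r m) by (apply Rpower_lt; auto). nra.
    - eexists; eauto.
    - replace ((INR 0 - m) * c 0%nat * z1 ^ 0 * (r ^ 0 - rho)) with (m * c 0%nat * (rho - 1)) by (simpl; ring).
      assert (0 < c 0%nat) by auto. apply Rmult_lt_0_compat; [apply Rmult_lt_0_compat|]; lra. }
  unfold m at 1. apply (Rmult_lt_reg_r (Fz z2)); auto.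
  unfold Rdiv at 2. rewrite Rmult_assoc, Rinv_l by lra. fold m. lra.
Qed.
End Mono.

Lemma lommel_eq mu nu x : 0 < x ->
  lommel_t mu nu x = Rpower (x/2) (mu+1) *
     PSeries (cc ((mu - nu + 3) / 2) ((mu + nu + 3) / 2)) (x*x/4).
Proof.
  intros Hx. unfold lommel_t, PSeries. rewrite <- Series_scal_l. apply Series_ext. intro k.
  unfold cc.
  replace (mu + 2 * INR k + 1) with ((mu + 1) + INR (2 * k)) by (rewrite mult_INR; simpl; ring).
  rewrite Rpower_plus, Rpower_pow by lra. rewrite pow_mult.
  replace ((x/2)^2) with (x*x/4) by field. unfold Rdiv at 1. ring.
Qed.

Lemma PSeries_ex c z : CV_radius c = p_infty -> ex_series (fun k => c k * z ^ k).
Proof.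
  intros Hc. assert (H := CV_radius_inside c z). rewrite Hc in H.
  specialize (H I). eapply ex_series_ext; [|apply H]. intros k. simpl.
  rewrite pow_n_pow. change scal with Rmult. simpl. ring.
Qed.

Lemma PSeries_exG c z : CV_radius c = p_infty -> ex_series (fun k => INR k * c k * z ^ k).
Proof.
  intros Hc. apply ex_series_incr_1.
  assert (H : ex_series (fun k => PS_derive c k * z ^ k)).
  { apply PSeries_ex. rewrite CV_radius_derive; auto. }
  apply ex_series_ext with (fun k => z * (PS_derive c k * z ^ k)).
  { intros k; unfold PS_derive; simpl; ring. }
  apply (@ex_series_scal_l R_AbsRing R_NormedModule z (fun k => PS_derive c k * z ^ k)); auto.
Qed.

Lemma zF'_eq c z : CV_radius c = p_infty ->
  z * PSeries (PS_derive c) z = Series (fun k => INR k * c k * z ^ k).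
Proof.
  intros Hc. rewrite Series_incr_1 by (apply PSeries_exG; auto).
  unfold PSeries. rewrite <- Series_scal_l. simpl (INR 0). rewrite Rmult_0_l, Rmult_0_l, Rplus_0_l.
  apply Series_ext. intros k. unfold PS_derive. simpl. ring.
Qed.

Lemma key_ratio mu nu x : 0 < x -> 0 < (mu - nu + 3) / 2 -> 0 < (mu + nu + 3) / 2 ->
  x * Derive (lommel_t mu nu) x / lommel_t mu nu x =
  (mu + 1) + 2 * (Gz (cc ((mu - nu + 3) / 2) ((mu + nu + 3) / 2)) (x*x/4) /
                  Fz (cc ((mu - nu + 3) / 2) ((mu + nu + 3) / 2)) (x*x/4)).
Proof.
  intros Hx Ha Hb.
  set (c := cc ((mu - nu + 3) / 2) ((mu + nu + 3) / 2)).
  assert (Hc : CV_radius c = p_infty) by (apply cc_radius; auto).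
  assert (Hcp : forall k, 0 < c k) by (intros; apply cc_pos; auto).
  set (H := fun t => Rpower (t/2) (mu+1) * PSeries c (t*t/4)).
  assert (Hloc : Derive (lommel_t mu nu) x = Derive H x).
  { apply Derive_ext_loc. exists (mkposreal x Hx). intros t Ht.
    unfold ball in Ht; simpl in Ht; unfold AbsRing_ball, abs, minus, plus, opp in Ht; simpl in Ht.
    apply Rabs_def2 in Ht. apply lommel_eq. lra. }
  set (z := x * x / 4).
  set (P := Rpower (x/2) (mu+1)).
  assert (HP : 0 < P) by (unfold P, Rpower; apply exp_pos).
  assert (HPm : Rpower (x/2) mu * (x/2) = P).
  { unfold P. rewrite Rpower_plus, Rpower_1; auto; lra. }
  assert (Hder : is_derive H x ((mu + 1) * Rpower (x/2) mu * / 2 * PSeries c z +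
                                P * (PSeries (PS_derive c) z * (x / 2)))).
  { unfold H. auto_derive.
    - split. apply ex_derive_Rpower; lra. split; auto.
      apply ex_derive_PSeries. rewrite Hc. exact I.
    - change (x * / 2) with (x / 2). change (x * x * / 4) with z.
      change (fun x0 => PSeries c x0) with (PSeries c).
      assert (Ed : Derive (fun t => Rpower t (mu+1)) (x/2) = (mu+1) * Rpower (x/2) (mu+1-1))
        by (apply is_derive_unique, is_derive_Rpower; lra).
      assert (Ed2 : Derive (PSeries c) z = PSeries (PS_derive c) z)
        by (apply Derive_PSeries; rewrite Hc; exact I).
      rewrite Ed, Ed2.
      replace (mu + 1 - 1) with mu by ring. fold P. field. }
  rewrite Hloc, (is_derive_unique _ _ _ Hder), lommel_eq by auto. fold c P z.
  assert (HF : 0 < Fz c z) by (apply Fz_pos; auto; try (intros; apply PSeries_ex; auto); try (intros; apply PSeries_exG; auto); unfold z; nra).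
  assert (Hz : z * PSeries (PS_derive c) z = Gz c z) by (apply zF'_eq; auto).
  change (PSeries c z) with (Fz c z).
  rewrite <- Hz.
  replace (Rpower (x / 2) mu) with (P / (x / 2)) by (rewrite <- HPm; field; lra).
  unfold z in *. field. repeat split; lra.
Qed.

Theorem theorem3p2 (mu nu : R) (hmu : -3 < mu) (hnu : Rabs nu < mu + 3) :
  forall x y : R, 0 < x -> x < y ->
    x * Derive (lommel_t mu nu) x / lommel_t mu nu x
    < y * Derive (lommel_t mu nu) y / lommel_t mu nu y.
Proof.
  intros x y Hx Hxy.
  apply Rabs_def2 in hnu. destruct hnu as [h1 h2].
  assert (Ha : 0 < (mu - nu + 3) / 2) by lra.
  assert (Hb : 0 < (mu + nu + 3) / 2) by lra.
  rewrite !key_ratio by (auto; lra).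
  apply Rplus_lt_compat_l, Rmult_lt_compat_l; [lra|].
  set (c := cc ((mu - nu + 3) / 2) ((mu + nu + 3) / 2)).
  assert (Hc : CV_radius c = p_infty) by (apply cc_radius; auto).
  apply (GF_mono c).
  - intros; apply cc_pos; auto.
  - intros; apply PSeries_ex; auto.
  - intros; apply PSeries_exG; auto.
  - nra.
  - nra.
Qed.
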